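(* Let $\Omega\subset\mathbb{R}^n$ be a convex open set and let $c:\Omega\times\mathbb{S}^n_-\to\mathbb{R}$, $c(x,\bar y)=\frac{\langle x,y\rangle}{y_{n+1}}$. Then $c$ is bi-Twisted, and for any $x\in\Omega$ and $p\in\mathbb{R}^n$, $$\mathrm{c\text{-}exp}_x(p)=\Big(\frac{p}{\sqrt{1+|p|^2}},-\frac{1}{\sqrt{1+|p|^2}}\Big).$$
   Context: Points of $\mathbb{S}^n\subset\mathbb{R}^{n+1}$ are written $\bar y=(y,y_{n+1})$ with $y\in\mathbb{R}^n$, and $\mathbb{S}^n_-=\{\bar y\in\mathbb{S}^n\mid y_{n+1}<0\}$. A smooth cost $c$ on $\Omega\times\mathbb{S}^n_-$ is bi-Twisted if for every $x_0\in\Omega$ and $\bar y_0\in\mathbb{S}^n_-$ the maps $\mathbb{S}^n_-\ni\bar y\mapsto -D_xc(x_0,\bar y)\in\mathbb{R}^n$ and $\Omega\ni x\mapsto -D_{\bar y}c(x,\bar y_0)\in T^*_{\bar y_0}\mathbb{S}^n$ are $C^1$ diffeomorphisms (onto their images). The inverse of $\bar y\mapsto -D_xc(x,\bar y)$ is the $c$-exponential map $\mathrm{c\text{-}exp}_x(\cdot)$. *)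

(* Defs.v *)
From HB Require Import structures.
From mathcomp Require Import all_boot all_order all_algebra.
From mathcomp Require Import all_classical all_reals all_analysis.
Set Implicit Arguments. Unset Strict Implicit. Unset Printing Implicit Defensive.
Import Order.TTheory GRing.Theory Num.Theory.
Import numFieldNormedType.Exports.
Local Open Scope classical_set_scope.
Local Open Scope ring_scope.

Section Defs.
Variable R : realType.

Definition dotv (n : nat) (u v : 'rV[R]_n) : R := (u *m v^T) 0 0.
Definition sqnorm (n : nat) (u : 'rV[R]_n) : R := dotv u u.

(* Points of S^n are written ybar = (y, y_{n+1}) with y in R^n *)
Definition Sminus (n : nat) : set ('rV[R]_n * R) :=
  [set yb | sqnorm yb.1 + yb.2 ^+ 2 = 1 /\ yb.2 < 0].

Definition ball1 (n : nat) : set 'rV[R]_n := [set u | sqnorm u < 1].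
Definition schart (n : nat) (u : 'rV[R]_n) : 'rV[R]_n * R :=
  (u, - Num.sqrt (1 - sqnorm u)).

Definition convex_rV (n : nat) (O : set 'rV[R]_n) : Prop :=
  forall x y (l : R), O x -> O y -> 0 <= l -> l <= 1 -> O ((1 - l) *: x + l *: y).

Definition grad (n : nat) (f : 'rV[R]_n -> R) (x : 'rV[R]_n) : 'rV[R]_n :=
  \row_i ('D_(delta_mx 0 i) f x).

Definition C1_on (m k : nat) (U : set 'rV[R]_m) (f : 'rV[R]_m -> 'rV[R]_k) : Prop :=
  open U /\ (forall x, U x -> differentiable f x) /\
  (forall v, {within U, continuous (fun z => 'd f z v)}).

Definition C1_diffeo_onto_image (m : nat) (U : set 'rV[R]_m)
    (f : 'rV[R]_m -> 'rV[R]_m) : Prop :=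
  C1_on U f /\
  (forall x y, U x -> U y -> f x = f y -> x = y) /\
  open (f @` U) /\
  exists g : 'rV[R]_m -> 'rV[R]_m,
    (forall x, U x -> g (f x) = x) /\ C1_on (f @` U) g.

(* Maps with domain or
   values related to S^n_- are expressed in the graph chart [schart] of S^n_-
   (coordinates u in the open unit ball); in particular D_ybar c(x, ybar0),
   an element of T*_{ybar0} S^n, is represented by its chart coordinates. *)
Definition bi_twisted (n : nat) (Omega : set 'rV[R]_n)
    (c : 'rV[R]_n -> 'rV[R]_n * R -> R) : Prop :=
  (forall x0, Omega x0 ->
     C1_diffeo_onto_image (@ball1 n)
       (fun u => - grad (fun x => c x (schart u)) x0)) /\
  (forall yb0, Sminus yb0 ->
     C1_diffeo_onto_image Omega
       (fun x => - grad (fun u => c x (schart u)) yb0.1)).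

Definition cost_c (n : nat) (x : 'rV[R]_n) (yb : 'rV[R]_n * R) : R :=
  dotv x yb.1 / yb.2.

End Defs.

(* Main.v *)
Require Import Defs.
From HB Require Import structures.
From mathcomp Require Import all_boot all_order all_algebra.
From mathcomp Require Import all_classical all_reals all_analysis.
Import Order.TTheory GRing.Theory Num.Theory.
Import numFieldNormedType.Exports.
Local Open Scope classical_set_scope.
Local Open Scope ring_scope.

From mathcomp Require Import ring lra.

Set Implicit Arguments. Unset Strict Implicit. Unset Printing Implicit Defensive.


Section Sc.
Context {R : realType} {W : normedModType R}.
Definition scl (a : R) (w : W) : W := a *: w.
Lemma scl_is_bilinear :
  bilinear_for
    (GRing.Scale.Law.clone _ _ *:%R _) (GRing.Scale.Law.clone _ _ *:%R _)
    scl.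
Proof.
split=> [u'|u] a x y /=; rewrite /scl.
- by rewrite scalerDl scalerA.
- by rewrite scalerDr scalerA mulrC -scalerA.
Qed.
HB.instance Definition _ := bilinear_isBilinear.Build R R W W _ _ scl
  scl_is_bilinear.
Lemma scl_cont : continuous (fun p : R * W => scl p.1 p.2).
Proof. exact: scale_continuous. Qed.

Lemma is_diff_scl (p : R * W) :
  is_diff p (fun q : R * W => scl q.1 q.2) (fun q => scl p.1 q.2 + scl q.1 p.2).
Proof.
apply: DiffDef; last by rewrite diff_bilin //; exact: scl_cont.
by apply: differentiable_bilin; exact: scl_cont.
Qed.

Lemma is_diff_scale {V : normedModType R} (k : V -> R) (f : V -> W) dk df x :
  is_diff x k dk -> is_diff x f df ->
  is_diff x (fun z => k z *: f z) (fun v => k x *: df v + dk v *: f x).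
Proof.
move=> hk hf.
have -> : (fun z => k z *: f z) = (fun q : R * W => scl q.1 q.2) \o (fun z => (k z, f z)) by [].
have := @is_diff_comp _ _ _ _ _ _ _ _ x (@is_diff_pair _ _ _ _ _ _ _ _ _ hk hf) (is_diff_scl (k x, f x)).
by [].
Qed.

Lemma is_diff_V {V : normedModType R} (f : V -> R) df x :
  is_diff x f df -> f x != 0 ->
  is_diff x (fun y => (f y)^-1) (fun v => - (f x) ^- 2 * df v).
Proof.
move=> hf fx0; apply: DiffDef; first exact: differentiableV.
by rewrite diffV // diff_val.
Qed.

Lemma is_diff_sum {V : normedModType R} n (F : 'I_n -> V -> W) dF x :
  (forall i, is_diff x (F i) (dF i)) ->
  is_diff x (fun z => \sum_(i < n) F i z) (fun v => \sum_(i < n) dF i v).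
Proof.
elim: n F dF => [|n IH] F dF h.
  have -> : (fun z : V => \sum_(i < 0) F i z) = cst 0 by rewrite funeqE => z; rewrite big_ord0.
  have -> : (fun z : V => \sum_(i < 0) dF i z) = 0 by rewrite funeqE => z; rewrite big_ord0.
  exact: is_diff_cst.
have -> : (fun z : V => \sum_(i < n.+1) F i z) = 
   (fun z => \sum_(i < n) F (widen_ord (leqnSn n) i) z) + F ord_max.
  by rewrite funeqE => z /=; rewrite big_ord_recr.
have -> : (fun z : V => \sum_(i < n.+1) dF i z) = 
   (fun z => \sum_(i < n) dF (widen_ord (leqnSn n) i) z) + dF ord_max.
  by rewrite funeqE => z /=; rewrite big_ord_recr.
apply: is_diffD => //; exact: IH.
Qed.

Lemma is_diff_of_derive (f : R -> R) (t d : R) :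
  is_derive t 1 f d -> is_diff t f (fun h => h * d).
Proof.
move=> hd; have df : derivable f t 1 by case: hd.
apply: DiffDef; first exact/derivable1_diffP.
rewrite deriv1E //; apply/funext => h /=; congr (_ *: _).
by rewrite derive1E; apply: derive_val.
Qed.
End Sc.

Lemma is_diff_coord {R : realType} m n (M : 'M[R]_(m, n)) i j :
  is_diff M (fun N : 'M[R]_(m, n) => N i j) (fun N => N i j).
Proof.
have @f : {linear 'M[R]_(m, n) -> R}.
  by exists (fun N : 'M[R]_(_, _) => N i j); do 2![eexists]; do ?[constructor];
     rewrite ?mxE// => ? *; rewrite ?mxE//; move=> ?; rewrite !mxE.
rewrite (_ : (fun _ => _) = f) //; apply: DiffDef.
  exact/linear_differentiable/coord_continuous.
by rewrite diff_lin //; exact: coord_continuous.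
Qed.


Section Dot.
Context {R : realType} {n : nat}.
Implicit Types u v z : 'rV[R]_n.

Lemma dotvE u v : dotv u v = \sum_(j < n) u 0 j * v 0 j.
Proof. by rewrite /dotv !mxE; apply: eq_bigr => j _; rewrite mxE. Qed.

Lemma dotvC u v : dotv u v = dotv v u.
Proof. by rewrite !dotvE; apply: eq_bigr => j _; rewrite mulrC. Qed.

Lemma dotvDl u v w : dotv (u + v) w = dotv u w + dotv v w.
Proof. by rewrite !dotvE -big_split; apply: eq_bigr => j _; rewrite mxE mulrDl. Qed.

Lemma dotvZl a u w : dotv (a *: u) w = a * dotv u w.
Proof. by rewrite !dotvE mulr_sumr; apply: eq_bigr => j _; rewrite mxE mulrA. Qed.

Lemma dotvDr u v w : dotv w (u + v) = dotv w u + dotv w v.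
Proof. by rewrite dotvC dotvDl !(dotvC w). Qed.

Lemma dotvZr a u w : dotv w (a *: u) = a * dotv w u.
Proof. by rewrite dotvC dotvZl dotvC. Qed.

Lemma dotv_delta u (i : 'I_n) : dotv u (delta_mx 0 i) = u 0 i.
Proof.
rewrite dotvE (bigD1 i) //= big1 ?addr0; first by rewrite mxE !eqxx mulr1.
by move=> j /negbTE ji; rewrite mxE ji andbF mulr0.
Qed.

Lemma sqnormZ a u : sqnorm (a *: u) = a ^+ 2 * sqnorm u.
Proof. by rewrite /sqnorm dotvZl dotvZr mulrA expr2. Qed.

Lemma sqnorm_ge0 u : 0 <= sqnorm u.
Proof. by rewrite /sqnorm dotvE; apply: sumr_ge0 => j _; rewrite -expr2 sqr_ge0. Qed.

Lemma is_diff_cst' {V W : normedModType R} (a : W) (x : V) :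
  is_diff x (fun _ => a) (fun _ => 0).
Proof. by apply: DiffDef; [exact: differentiable_cst | rewrite diff_cst]. Qed.

Lemma is_diff_dotl a z :
  is_diff z (fun u => dotv u a) (fun v => dotv v a).
Proof.
have -> : (fun u => dotv u a) = (fun u => \sum_(j < n) (fun w : 'rV[R]_n => w 0 j * a 0 j) u).
  by rewrite funeqE => u; rewrite dotvE.
apply: (is_diff_sum (F := fun j (w : 'rV[R]_n) => w 0 j * a 0 j) (dF := fun j (w : 'rV[R]_n) => w 0 j * a 0 j)) => j.
have -> : (fun w : 'rV[R]_n => w 0 j * a 0 j) = (fun w => w 0 j) * cst (a 0 j) by [].
apply: is_diff_eq; first by apply: is_diffM; [exact: is_diff_coord| exact: is_diff_cst].
by rewrite funeqE => w; rewrite !fctE /= scaler0 add0r mulrC.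
Qed.

Lemma is_diff_dotr a z :
  is_diff z (fun u => dotv a u) (fun v => dotv a v).
Proof.
have -> : (fun u => dotv a u) = (fun u => dotv u a) by rewrite funeqE => u; rewrite dotvC.
exact: is_diff_dotl.
Qed.

Lemma is_diff_sqnorm z :
  is_diff z (@sqnorm R n) (fun v => 2 * dotv z v).
Proof.
have -> : (@sqnorm R n) = (fun u => \sum_(j < n) ((fun w : 'rV[R]_n => w 0 j) * (fun w : 'rV[R]_n => w 0 j)) u).
  by rewrite funeqE => u; rewrite /sqnorm dotvE.
apply: is_diff_eq; first by apply: (is_diff_sum (F := fun j => (fun w : 'rV[R]_n => w 0 j) * (fun w : 'rV[R]_n => w 0 j))) => j; apply: is_diffM; exact: is_diff_coord.
rewrite funeqE => v; rewrite dotvE mulr_sumr; apply: eq_bigr => j _ /=.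
by rewrite !fctE /= -mulr2n mulr_natl.
Qed.

Definition gsq (al be : R) u := Num.sqrt (al + be * sqnorm u).

Lemma is_diff_gsq al be z : 0 < al + be * sqnorm z ->
  is_diff z (gsq al be) (fun v => (be * (2 * dotv z v)) * (2 * gsq al be z)^-1).
Proof.
move=> hp.
have hi : is_diff z (fun u => al + be * sqnorm u) (fun v => be * (2 * dotv z v)).
  apply: is_diff_eq.
    apply: (@is_diffD _ _ _ (cst al) (fun u => be * sqnorm u)).
    have -> : (fun u => be * sqnorm u) = be *: (@sqnorm R n) by [].
    exact: is_diffZ (is_diff_sqnorm z).
  by rewrite funeqE => v /=; rewrite add0r.
have ho := is_diff_of_derive (is_derive1_sqrt hp).
have -> : gsq al be = Num.sqrt \o (fun u => al + be * sqnorm u) by [].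
exact: is_diff_comp hi ho.
Qed.
End Dot.


Section C1.
Context {R : realType}.

Lemma C1_of_is_diff m k (U : set 'rV[R]_m) (f : 'rV[R]_m -> 'rV[R]_k)
  (df : 'rV[R]_m -> 'rV[R]_m -> 'rV[R]_k) :
  open U -> (forall z, U z -> is_diff z f (df z)) ->
  (forall v z, U z -> {for z, continuous (fun w => df w v)}) -> C1_on U f.
Proof.
move=> oU hd hc; split => //; split.
  by move=> z /hd [].
move=> v; rewrite continuous_open_subspace // => z /set_mem Uz.
have e : {near z, (fun w => df w v) =1 (fun w => 'd f w v)}.
  have : \forall w \near z, U w by apply: open_nbhs_nbhs; split.
  apply: filterS => w Uw.
  by case: (hd w Uw) => _ ->.
have hz : 'd f (z : 'rV[R]_m) v = df z v.
  by have [_ ->] := hd (z : 'rV[R]_m) Uz.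
have h2 : (fun w => df w v) @ z --> 'd f z v.
  rewrite hz; exact: hc v z Uz.
exact: cvg_trans (near_eq_cvg e) h2.
Qed.
End C1.


Section Lin.
Context {R : realType} {n : nat}.
Implicit Types x y w : 'rV[R]_n.

Definition Lmap (a b : R) w x : 'rV[R]_n := a *: x + (b * dotv x w) *: w.

Lemma is_diff_Lmap a b w z : is_diff z (Lmap a b w) (Lmap a b w).
Proof.
have hk : is_diff z (fun x => b * dotv x w) (b *: (fun x => dotv x w)).
  have -> : (fun x => b * dotv x w) = b *: (fun x => dotv x w) by [].
  exact: is_diffZ (is_diff_dotl w z).
have h := is_diff_scale hk (is_diff_cst' w z).
have h1 : is_diff z (fun x : 'rV[R]_n => a *: x) (fun x => a *: x).
  exact: (is_diffZ a (is_diff_id z)).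
have hD := is_diffD h1 h.
have -> : Lmap a b w = (fun x : 'rV[R]_n => a *: x) + (fun x => (b * dotv x w) *: w) by [].
apply: is_diff_eq hD _.
by rewrite funeqE => v; rewrite /Lmap !fctE /= scaler0 add0r.
Qed.

Lemma Lmap_inv a b w x : a != 0 -> a + b * sqnorm w != 0 ->
  Lmap a^-1 (- (b / (a * (a + b * sqnorm w)))) w (Lmap a b w x) = x.
Proof.
move=> a0 ab0; rewrite /Lmap dotvDl !dotvZl scalerDr !scalerA mulVf // scale1r.
rewrite -addrA -scalerDl; set c := (X in X *: w).
suff -> : c = 0 by rewrite scale0r addr0.
rewrite /c /sqnorm; rewrite /sqnorm in ab0; field.
by rewrite ab0 a0.
Qed.

Lemma Lmap_inv' a b w y : a != 0 -> a + b * sqnorm w != 0 ->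
  Lmap a b w (Lmap a^-1 (- (b / (a * (a + b * sqnorm w)))) w y) = y.
Proof.
move=> a0 ab0; rewrite /Lmap dotvDl !dotvZl scalerDr !scalerA divff // scale1r.
rewrite -addrA -scalerDl; set c := (X in X *: w).
suff -> : c = 0 by rewrite scale0r addr0.
rewrite /c /sqnorm; rewrite /sqnorm in ab0; field.
by rewrite ab0 a0.
Qed.
Lemma diffeo_Lmap (Om : set 'rV[R]_n) a b w : open Om -> a != 0 ->
  a + b * sqnorm w != 0 -> C1_diffeo_onto_image Om (Lmap a b w).
Proof.
move=> oOm a0 ab0.
set Li := Lmap a^-1 (-(b/(a*(a+b*sqnorm w)))) w.
have hLi x : Li (Lmap a b w x) = x by exact: Lmap_inv.
have hiL y : Lmap a b w (Li y) = y by exact: Lmap_inv'.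
have img : Lmap a b w @` Om = Li @^-1` Om.
  rewrite eqEsubset; split => y /=.
    by case=> x Omx <-; rewrite hLi.
  by move=> Omy; exists (Li y) => //.
have C1L c d (U : set 'rV[R]_n) : open U -> C1_on U (Lmap c d w).
  move=> oU; apply: (@C1_of_is_diff _ _ _ _ _ (fun _ => Lmap c d w)) => //.
    by move=> z _; exact: is_diff_Lmap.
  by move=> v z _; exact: (@cst_continuous _ _ (Lmap c d w v) z).
have oimg : open (Lmap a b w @` Om).
  rewrite img; apply: open_comp => // y _.
  have [dd _] := is_diff_Lmap a^-1 (-(b/(a*(a+b*sqnorm w)))) w y.
  exact: differentiable_continuous.
split; first exact: C1L.
split; first by move=> x y _ _ e; rewrite -(hLi x) e hLi.
split => //.
exists Li; split => //.
exact: C1L.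
Qed.
End Lin.


Section Nonlin.
Context {R : realType} {n : nat}.
Implicit Types x y u z : 'rV[R]_n.

Definition Fmap (al be : R) u : 'rV[R]_n := (gsq al be u)^-1 *: u.

Definition dFmap (al be : R) z (v : 'rV[R]_n) : 'rV[R]_n :=
  (gsq al be z)^-1 *: v +
  (- (gsq al be z) ^- 2 * ((be * (2 * dotv z v)) * (2 * gsq al be z)^-1)) *: z.

Lemma gsq_gt0 al be z : 0 < al + be * sqnorm z -> 0 < gsq al be z.
Proof. by move=> h; rewrite /gsq sqrtr_gt0. Qed.

Lemma is_diff_Fmap al be z : 0 < al + be * sqnorm z ->
  is_diff z (Fmap al be) (dFmap al be z).
Proof.
move=> hp.
have hg := is_diff_gsq hp.
have hk := is_diff_V hg (lt0r_neq0 (gsq_gt0 hp)).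
have h := is_diff_scale hk (is_diff_id z).
exact: h.
Qed.

Lemma cont_gsq al be z : 0 < al + be * sqnorm z -> {for z, continuous (gsq al be)}.
Proof.
move=> hp; have [dd _] := is_diff_gsq hp.
exact: differentiable_continuous.
Qed.

Lemma cont_dotl w z : {for z, continuous (fun u : 'rV[R]_n => dotv u w)}.
Proof.
have [dd _] := is_diff_dotl w z.
exact: differentiable_continuous.
Qed.

Lemma cont_dFmap al be v z : 0 < al + be * sqnorm z ->
  {for z, continuous (fun w => dFmap al be w v)}.
Proof.
move=> hp.
have hG := cont_gsq hp.
have G0 : gsq al be z != 0 by exact: lt0r_neq0 (gsq_gt0 hp).
have hGi : {for z, continuous (fun w => (gsq al be w)^-1)} by exact: continuousV.
have hG2 : {for z, continuous (fun w => (gsq al be w) ^+ 2)}.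
  exact: (continuousM hG hG).
have hG2i : {for z, continuous (fun w => (gsq al be w) ^- 2)}.
  by apply: continuousV => //; rewrite expf_neq0.
have h2G : {for z, continuous (fun w => 2 * gsq al be w)}.
  exact: (continuousM (@cst_continuous _ _ (2:R) z) hG).
have h2Gi : {for z, continuous (fun w => (2 * gsq al be w)^-1)}.
  by apply: continuousV => //; rewrite mulf_neq0 // pnatr_eq0.
have hd : {for z, continuous (fun w => be * (2 * dotv w v))}.
  have h1 : {for z, continuous (fun w => 2 * dotv w v)}.
    exact: (continuousM (@cst_continuous _ _ (2:R) z) (cont_dotl (w:=v) (z:=z))).
  exact: (continuousM (@cst_continuous _ _ be z) h1).
have hs : {for z, continuous (fun w => - (gsq al be w) ^- 2 * ((be * (2 * dotv w v)) * (2 * gsq al be w)^-1))}.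
  exact: (continuousM (continuousN hG2i) (continuousM hd h2Gi)).
have t1 : {for z, continuous (fun w => (gsq al be w)^-1 *: v)}.
  exact: continuousZr_tmp.
have t2 : {for z, continuous (fun w => (- (gsq al be w) ^- 2 * ((be * (2 * dotv w v)) * (2 * gsq al be w)^-1)) *: w)}.
  have hi : {for z, continuous (fun w : 'rV[R]_n => w)} by exact: cvg_id.
  exact: (continuousZ hs hi).
exact: (continuousD t1 t2).
Qed.

Lemma C1_Fmap al be (U : set 'rV[R]_n) : open U ->
  (forall u, U u -> 0 < al + be * sqnorm u) -> C1_on U (Fmap al be).
Proof.
move=> oU hU; apply: (@C1_of_is_diff _ _ _ _ _ (dFmap al be)) => //.
  by move=> z Uz; exact: is_diff_Fmap (hU z Uz).
by move=> v z Uz; exact: cont_dFmap (hU z Uz).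
Qed.
End Nonlin.


Section Grad.
Context {R : realType} {n : nat}.
Implicit Types x y u z : 'rV[R]_n.

Lemma grad_is_diff (f : 'rV[R]_n -> R) df x : is_diff x f df ->
  grad f x = \row_i df (delta_mx 0 i).
Proof.
move=> [dd hd]; apply/rowP => i; rewrite !mxE deriveE //.
by rewrite hd.
Qed.

Lemma grad_cost1 (yb : 'rV[R]_n * R) x0 :
  grad (fun x => cost_c x yb) x0 = yb.2^-1 *: yb.1.
Proof.
have h : is_diff x0 (fun x => cost_c x yb) (yb.2^-1 *: (fun x => dotv x yb.1)).
  have -> : (fun x => cost_c x yb) = yb.2^-1 *: (fun x => dotv x yb.1).
    by rewrite funeqE => x; rewrite /cost_c !fctE /= mulrC.
  exact: is_diffZ (is_diff_dotl yb.1 x0).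
rewrite (grad_is_diff h); apply/rowP => i; rewrite !mxE /=.
by rewrite !fctE /= dotvC dotv_delta.
Qed.
Lemma grad_cost2 x u0 (s : R) : 0 < s -> sqnorm u0 + s ^+ 2 = 1 ->
  - grad (fun u => cost_c x (schart u)) u0 = Lmap (s^-1) (s ^- 3) u0 x.
Proof.
move=> s0 hs.
have q : 0 < 1 + -1 * sqnorm u0 by rewrite mulN1r -hs addrAC subrr add0r exprn_gt0.
have gs : gsq 1 (-1) u0 = s.
  by rewrite /gsq mulN1r -hs addrAC subrr add0r sqrtr_sqr gtr0_norm.
have -> : (fun u => cost_c x (schart u)) =
    - ((fun u => dotv x u) * (fun u => (gsq 1 (-1) u)^-1)).
  by rewrite funeqE => u; rewrite /cost_c /schart /gsq !fctE /= mulN1r invrN mulrN.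
have hg := is_diff_gsq q.
have hk := is_diff_V hg (lt0r_neq0 (gsq_gt0 q)).
have hm := is_diffM (is_diff_dotr x u0) hk.
have hN := is_diffN hm.
rewrite (grad_is_diff hN); apply/rowP => i; rewrite !mxE !fctE /= !gs.
rewrite !dotv_delta opprK /GRing.scale /=.
by field; rewrite lt0r_neq0.
Qed.
End Grad.


Section Alg.
Context {R : realType} {n : nat}.
Implicit Types x y u z p : 'rV[R]_n.

Lemma Fmap_inv1 u : sqnorm u < 1 -> Fmap 1 1 (Fmap 1 (-1) u) = u.
Proof.
move=> hu.
have q : 0 < 1 + -1 * sqnorm u by lra.
rewrite /Fmap; set s := gsq 1 (-1) u.
have s0 : 0 < s by exact: gsq_gt0.
have s2 : s ^+ 2 = 1 + -1 * sqnorm u by rewrite /s /gsq sqr_sqrtr // ltW.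
have e : gsq 1 1 (s^-1 *: u) = s^-1.
  rewrite /gsq sqnormZ.
  have hq : sqnorm u = 1 - s ^+ 2 by rewrite s2; ring.
  have -> : 1 + 1 * (s^-1 ^+ 2 * sqnorm u) = (s^-1) ^+ 2.
    by rewrite hq; field; rewrite lt0r_neq0.
  by rewrite sqrtr_sqr gtr0_norm // invr_gt0.
by rewrite e invrK scalerA mulfV ?scale1r // lt0r_neq0.
Qed.

Lemma Fmap_inv2 p : Fmap 1 (-1) (Fmap 1 1 p) = p /\ sqnorm (Fmap 1 1 p) < 1.
Proof.
have q : 0 < 1 + 1 * sqnorm p by have := sqnorm_ge0 p; lra.
rewrite /Fmap; set t := gsq 1 1 p.
have t0 : 0 < t by exact: gsq_gt0.
have t2 : t ^+ 2 = 1 + 1 * sqnorm p by rewrite /t /gsq sqr_sqrtr // ltW.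
have hq : sqnorm p = t ^+ 2 - 1 by rewrite t2; ring.
have sq : sqnorm (t^-1 *: p) = 1 - (t^-1) ^+ 2.
  by rewrite sqnormZ hq; field; rewrite lt0r_neq0.
split; last first.
  rewrite sq; have : 0 < t^-1 ^+ 2 by rewrite exprn_gt0 // invr_gt0.
  lra.
have e : gsq 1 (-1) (t^-1 *: p) = t^-1.
  rewrite /gsq sq.
  have -> : 1 + -1 * (1 - t^-1 ^+ 2) = (t^-1) ^+ 2 by ring.
  by rewrite sqrtr_sqr gtr0_norm // invr_gt0.
by rewrite e invrK scalerA mulfV ?scale1r // lt0r_neq0.
Qed.
End Alg.

Unset Implicit Arguments.
Set Strict Implicit.

Theorem proposition4p2 (R : realType) (n : nat) (Omega : set 'rV[R]_n) :
  open Omega -> convex_rV Omega ->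
  bi_twisted Omega (@cost_c R n) /\
  (forall (x p : 'rV[R]_n), Omega x ->
     forall yb : 'rV[R]_n * R, Sminus yb ->
       (- grad (fun z => cost_c z yb) x = p <->
        yb = ((Num.sqrt (1 + sqnorm p))^-1 *: p,
              - (Num.sqrt (1 + sqnorm p))^-1))).
Proof.
move=> oOm _; split; first split.
- move=> x0 _.
  have -> : (fun u => - grad (fun x => cost_c x (schart u)) x0) = Fmap 1 (-1).
    rewrite funeqE => u.
    by rewrite grad_cost1 /schart /= /Fmap /gsq mulN1r invrN scaleNr opprK.
  have ob : open (@ball1 R n).
    have -> : @ball1 R n = (@sqnorm R n) @^-1` [set t | t < 1] by [].
    apply: open_comp; last exact: open_lt.
    move=> z _; have [dd _] := @is_diff_sqnorm R n z.
    exact: differentiable_continuous.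
  have img : Fmap 1 (-1) @` (@ball1 R n) = setT.
    rewrite eqEsubset; split => // p _.
    have [h1 h2] := Fmap_inv2 p.
    by exists (Fmap 1 1 p).
  split.
    apply: C1_Fmap => // u hu; rewrite /ball1 /= in hu; lra.
  split.
    move=> x y hx hy e.
    by rewrite -(Fmap_inv1 hx) e Fmap_inv1.
  split; first by rewrite img; exact: openT.
  exists (Fmap 1 1); split.
    by move=> x hx; exact: Fmap_inv1.
  rewrite img; apply: C1_Fmap; first exact: openT.
  by move=> u _; have := sqnorm_ge0 u; lra.
- move=> yb0 [h1 h2].
  set s := - yb0.2.
  have s0 : 0 < s by rewrite /s oppr_gt0.
  have hs : sqnorm yb0.1 + s ^+ 2 = 1 by rewrite /s sqrrN.
  have -> : (fun x => - grad (fun u => cost_c x (schart u)) yb0.1) =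
      Lmap (s^-1) (s ^- 3) yb0.1.
    by rewrite funeqE => x; rewrite (grad_cost2 x s0 hs).
  apply: diffeo_Lmap => //; first by rewrite invr_eq0 lt0r_neq0.
  have a1 : 0 < s^-1 by rewrite invr_gt0.
  have a2 : 0 <= s ^- 3 * sqnorm yb0.1 by rewrite mulr_ge0 ?sqnorm_ge0 // invr_ge0 exprn_ge0 // ltW.
  apply: lt0r_neq0; lra.
- move=> x p _ [y t] [/= h1 h2].
  rewrite grad_cost1 /=; split.
  + move=> <-.
    have t0 : t != 0 by rewrite ltr0_neq0.
    have e : Num.sqrt (1 + sqnorm (- (t^-1 *: y))) = - t^-1.
      have -> : 1 + sqnorm (- (t^-1 *: y)) = (t^-1) ^+ 2.
        rewrite -scaleNr sqnormZ.
        have -> : sqnorm y = 1 - t ^+ 2 by rewrite -h1; ring.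
        by field.
      by rewrite sqrtr_sqr ltr0_norm // invr_lt0.
    rewrite e invrN invrK opprK scalerN scaleNr opprK scalerA mulfV // scale1r.
    by [].
  + case=> -> ->.
    set r := Num.sqrt (1 + sqnorm p).
    have r0 : r != 0.
      rewrite /r; apply: lt0r_neq0; rewrite sqrtr_gt0.
      by have := sqnorm_ge0 p; lra.
    by rewrite invrN invrK scaleNr scalerA mulfV // scale1r opprK.
Qed.
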